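(* Let $G=(g_1,\dots,g_k)\in\mathbb{N}_0^k$ with $g_1>0$ and $c(G)=(c_2,\dots,c_k)$, and let $z_1=\gcd(G)$. Then $G$ is telescopic if and only if for each $i=2,\dots,k$ there exists $z_i\in\langle z_1\rangle$ (i.e. a non-negative multiple of $z_1$) such that $g_i=z_iC_{i,k}$, $\gcd(z_i/z_1,c_i)=1$, and $z_i\in\langle z_jC_{j,i-1}:1\le j<i\rangle$.
   Context: $\langle A\rangle$ is the set of $\mathbb{N}_0$-linear combinations of the elements of $A$. $G_i=(g_1,\dots,g_i)$, $d_i=\gcd(G_i)$, $c_j=d_{j-1}/d_j$ for $2\le j\le k$; $G$ is telescopic if $c_jg_j\in\langle G_{j-1}\rangle$ for all $2\le j\le k$. $C_{m,n}=\prod_{j=m+1}^n c_j$, with the empty product (when $n\le m$) equal to $1$. *)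

(* Defs.v *)
(* Sequences G = (g_1,...,g_k) are represented by g : nat -> nat,
   only the values at indices 1..k being relevant. *)
From mathcomp Require Import all_boot.
Set Implicit Arguments. Unset Strict Implicit. Unset Printing Implicit Defensive.

Definition in_span (m : nat) (f : nat -> nat) (x : nat) : Prop :=
  exists a : nat -> nat, x = \sum_(1 <= j < m.+1) a j * f j.

Definition dG (g : nat -> nat) (i : nat) : nat :=
  \big[gcdn/0]_(1 <= j < i.+1) g j.

Definition cG (g : nat -> nat) (j : nat) : nat := dG g j.-1 %/ dG g j.

Definition CG (g : nat -> nat) (m n : nat) : nat :=
  \prod_(m.+1 <= j < n.+1) cG g j.

Definition telescopic (k : nat) (g : nat -> nat) : Prop :=
  forall j, 2 <= j <= k -> in_span j.-1 g (cG g j * g j).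

(* Main.v *)
Require Import Defs.
From mathcomp Require Import all_boot zify.

Lemma coprime_divg m n : 0 < gcdn m n -> coprime (m %/ gcdn m n) (n %/ gcdn m n).
Proof.
move=> gt0; rewrite /coprime; apply/eqP.
apply/eqP; rewrite -(eqn_pmul2r gt0) mul1n muln_gcdl !divnK ?dvdn_gcdl ?dvdn_gcdr //.
Qed.

Lemma dG_succ g i : dG g i.+1 = gcdn (dG g i) (g i.+1).
Proof. by rewrite /dG big_nat_recr. Qed.

Lemma dG1 g : dG g 1 = g 1.
Proof. by rewrite /dG big_nat1. Qed.

Lemma dG_pos g i : 0 < g 1 -> 1 <= i -> 0 < dG g i.
Proof.
move=> h; elim: i => [//|[|i] IH _]; first by rewrite dG1.
by rewrite dG_succ gcdn_gt0 IH.
Qed.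

Lemma dG_dvd_g g i : 1 <= i -> dG g i %| g i.
Proof. by case: i => // i _; rewrite dG_succ dvdn_gcdr. Qed.

Lemma dG_mono g i j : i <= j -> dG g j %| dG g i.
Proof.
elim: j => [|j IH]; first by rewrite leqn0 => /eqP ->.
rewrite leq_eqVlt => /orP [/eqP -> //|lt].
by rewrite dG_succ (dvdn_trans (dvdn_gcdl _ _)) // IH.
Qed.

Lemma CG_d g m n : 0 < g 1 -> 1 <= m <= n -> CG g m n * dG g n = dG g m.
Proof.
move=> h /andP [m1]; elim: n => [|n IH]; first by rewrite leqn0 => /eqP m0; rewrite m0 in m1.
rewrite leq_eqVlt => /orP [/eqP ->|lt]; first by rewrite /CG big_geq ?mul1n.
rewrite /CG big_nat_recr //= -/(CG g m n) -mulnA /cG /= divnK; last by rewrite dG_succ dvdn_gcdl.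
exact: IH.
Qed.

Lemma key k g z i : 0 < g 1 -> 2 <= i <= k ->
  (forall j, 1 <= j <= k -> z j = g j %/ dG g j * dG g k) ->
  in_span i.-1 (fun j => z j * CG g j i.-1) (z i) <-> in_span i.-1 g (cG g i * g i).
Proof.
move=> h1 /andP [i2 ik] hz.
have Kp : 0 < dG g k by apply: dG_pos => //; apply: leq_trans ik; apply: leq_trans i2.
have Dp : 0 < dG g i.-1 by apply: dG_pos => //; lia.
have F1 : forall a, (\sum_(1 <= j < i.-1.+1) a j * (z j * CG g j i.-1)) * dG g i.-1
   = (\sum_(1 <= j < i.-1.+1) a j * g j) * dG g k.
  move=> a; rewrite !big_distrl; apply: eq_big_nat => j /andP [j1 ji].
  have jk : j <= k by lia.
  change (a j * (z j * CG g j i.-1) * dG g i.-1 = a j * g j * dG g k).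
  have jd : 1 <= j <= i.-1 by lia.
  have jk' : 1 <= j <= k by lia.
  rewrite (hz j jk') -!mulnA (@CG_d g j i.-1 h1 jd).
  by rewrite (mulnC (dG g k)) (mulnA (g j %/ dG g j)) divnK ?dG_dvd_g // mulnA.
have F2 : z i * dG g i.-1 = cG g i * g i * dG g k.
  have i1 : 1 <= i by apply: leq_trans i2.
  rewrite hz ?i1 // -{1}(@divnK (dG g i) (dG g i.-1)); last by apply: dG_mono; apply: leq_pred.
  rewrite /cG -mulnA (mulnC (dG g k)) (mulnC (dG g i.-1 %/ dG g i)) !mulnA divnK ?dG_dvd_g //.
  by rewrite (mulnC (g i)).
split.
  move=> [a ha]; exists a; apply/eqP; rewrite -(eqn_pmul2r Kp) -F1 -F2 ha //.
move=> [a ha]; exists a; apply/eqP; rewrite -(eqn_pmul2r Dp) F1 F2 ha //.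
Qed.

Theorem mainTheorem9 (k : nat) (g : nat -> nat) (hk : 1 <= k) (hg1 : 0 < g 1) :
  telescopic k g <->
  exists z : nat -> nat,
    z 1 = dG g k /\
    forall i, 2 <= i <= k ->
      [/\ in_span 1 (fun _ => z 1) (z i),
          g i = z i * CG g i k,
          coprime (z i %/ z 1) (cG g i) &
          in_span i.-1 (fun j => z j * CG g j i.-1) (z i)].
Proof.
have Kp : 0 < dG g k by apply: dG_pos.
split.
  move=> tel; exists (fun j => g j %/ dG g j * dG g k); split.
    by rewrite dG1 divnn hg1 mul1n.
  move=> i hi; have i1 : 1 <= i by apply: leq_trans (andP hi).1.
  have ik := (andP hi).2.
  split.
  - by exists (fun _ => g i %/ dG g i); rewrite big_nat1 /= dG1 divnn hg1 mul1n.
  - by rewrite -mulnA (mulnC (dG g k)) (@CG_d g i k hg1 (introT andP (conj i1 ik))) divnK ?dG_dvd_g.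
  - rewrite dG1 divnn hg1 mul1n mulnK //.
    case: i hi i1 {ik} => // i hi _; rewrite /cG /= dG_succ coprime_sym.
    have i1 : 1 <= i by case/andP: hi.
    by apply: coprime_divg; rewrite gcdn_gt0 (@dG_pos g i hg1 i1).
  - by apply/(@key k g (fun j => g j %/ dG g j * dG g k) i hg1 hi (fun _ _ => erefl)); apply: tel.
move=> [z [z1 hz]].
have hz' : forall j, 1 <= j <= k -> z j = g j %/ dG g j * dG g k.
  move=> j /andP [j1 jk]; case: (ltngtP j 1) j1 => // [lt|eq] _; last first.
    by rewrite eq z1 dG1 divnn hg1 mul1n.
  have [_ hgj _ _] := hz j (introT andP (conj lt jk)).
  have Cp : 0 < CG g j k.
    by move: (@dG_pos g j hg1 (ltnW lt)); rewrite -(@CG_d g j k hg1 (introT andP (conj (ltnW lt) jk))) muln_gt0 => /andP[].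
  apply/eqP; rewrite -(eqn_pmul2r Cp) -hgj -mulnA (mulnC (dG g k)) (@CG_d g j k hg1 (introT andP (conj (ltnW lt) jk))) divnK ?dG_dvd_g ?(ltnW lt) //.
move=> i hi; case: (hz i hi) => _ _ _ hs; exact/(@key k g z i hg1 hi hz').
Qed.
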